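(* Let $(s,\pi)$ be a plane permutation on $[n]$ with $s=(s_0s_1\cdots s_{n-1})$ and diagonal $D=s\circ\pi^{-1}$, let $h=(i,j,k,l)$ with $i\le j<k\le l$ and $\{i,j,k,l\}\subset[n-1]$, and let $(s^h,\pi^h)=\chi_h\circ(s,\pi)$. Then $\pi^h(s_r)=\pi(s_r)$ for every $r\in\{0,1,\ldots,n-1\}\setminus\{i-1,j,k-1,l\}$. Moreover, if $j+1<k$ then $$\pi^h(s_{i-1})=\pi(s_{k-1}),\quad \pi^h(s_j)=\pi(s_l),\quad \pi^h(s_{k-1})=\pi(s_{i-1}),\quad \pi^h(s_l)=\pi(s_j),$$ and if $j=k-1$ then $$\pi^h(s_{i-1})=\pi(s_j),\quad \pi^h(s_j)=\pi(s_l),\quad \pi^h(s_l)=\pi(s_{i-1}).$$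
   Context: Permutations of $[n]=\{1,\dots,n\}$ are multiplied as composition of maps, $(\sigma\tau)(x)=\sigma(\tau(x))$. A plane permutation on $[n]$ is a pair $(s,\pi)$ where $s=(s_0s_1\cdots s_{n-1})$ is an $n$-cycle on $[n]$, written with a fixed starting element $s_0$, and $\pi$ is an arbitrary permutation of $[n]$; its diagonal is $D=s\circ\pi^{-1}$. For $h=(i,j,k,l)$ with $i\le j<k\le l$ and $\{i,j,k,l\}\subset[n-1]$, let $s^h$ be the $n$-cycle $(s_0,\dots,s_{i-1},s_k,\dots,s_l,s_{j+1},\dots,s_{k-1},s_i,\dots,s_j,s_{l+1},\dots,s_{n-1})$ obtained by interchanging the blocks $s_i\cdots s_j$ and $s_k\cdots s_l$ (when $k=j+1$ the middle block is empty), and let $\pi^h=D^{-1}\circ s^h$, so that $(s^h,\pi^h)$ is a plane permutation with the same diagonal $D$. Write $(s^h,\pi^h)=\chi_h\circ(s,\pi)$. *)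

(* Defs.v *)
From mathcomp Require Import all_boot all_fingroup.
Set Implicit Arguments. Unset Strict Implicit. Unset Printing Implicit Defensive.

(* The cyclic permutation (s_0 s_1 ... s_{m-1}) given by a duplicate-free
   sequence [sq]: it maps each s_r to s_{r+1} (indices mod m), via [path.next];
   elements not in [sq] are fixed.  If [sq] has duplicates we return 1. *)
Definition seq_cycle (T : finType) (sq : seq T) : {perm T} :=
  match uniq sq as b return uniq sq = b -> {perm T} with
  | true => fun H => perm (can_inj (prev_next H))
  | false => fun _ => 1%g
  end erefl.

Definition block (T : Type) (a b : nat) (sq : seq T) : seq T := drop a (take b sq).

Definition swap_blocks (T : Type) (i j k l : nat) (sq : seq T) : seq T :=
  take i sq ++ block k l.+1 sq ++ block j.+1 k sq ++ block i j.+1 sq ++ drop l.+1 sq.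

(* Composition of maps as in the paper: (sigma \o tau)(x) = sigma (tau x).
   In mathcomp, (tau * sigma) x = sigma (tau x). *)
Definition pcomp (T : finType) (sigma tau : {perm T}) : {perm T} := (tau * sigma)%g.

Definition diagonal (T : finType) (s pi : {perm T}) : {perm T} := pcomp s (pi^-1)%g.

Definition chi_pi (T : finType) (i j k l : nat) (sq : seq T) (pi : {perm T}) : {perm T} :=
  pcomp ((diagonal (seq_cycle sq) pi)^-1)%g (seq_cycle (swap_blocks i j k l sq)).

(* Main.v *)
Require Import Defs.
From mathcomp Require Import all_boot all_fingroup.
From mathcomp Require Import zify.

Section Helpers.
Variable T : eqType.
Variable x0 : T.

Lemma nextN1 (t : seq T) p : uniq t -> p.+1 < size t ->
  next t (nth x0 t p) = nth x0 t p.+1.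
Proof.
move=> U H; rewrite next_nth mem_nth ?(ltnW H) // index_uniq ?(ltnW H) //.
case: t U H => [|y t'] //= U H.
by rewrite (set_nth_default x0).
Qed.

Lemma nextN2 (t : seq T) : uniq t -> 0 < size t ->
  next t (nth x0 t (size t).-1) = nth x0 t 0.
Proof.
move=> U H; rewrite next_nth mem_nth ?prednK // ?index_uniq ?prednK //.
case: t U H => [|y t'] //= U H.
by rewrite nth_default.
Qed.

Lemma prevP1 (t : seq T) p : uniq t -> p.+1 < size t ->
  prev t (nth x0 t p.+1) = nth x0 t p.
Proof. by move=> U H; rewrite -nextN1 // prev_next. Qed.

Lemma prevP2 (t : seq T) : uniq t -> 0 < size t ->
  prev t (nth x0 t 0) = nth x0 t (size t).-1.
Proof. by move=> U H; rewrite -nextN2 // prev_next. Qed.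

Lemma size_block a b (s : seq T) : b <= size s -> size (block a b s) = b - a.
Proof. by move=> H; rewrite /block size_drop size_takel. Qed.

Lemma nth_block a b (s : seq T) q : q < b - a -> nth x0 (block a b s) q = nth x0 s (a + q).
Proof. by move=> H; rewrite /block nth_drop nth_take //; lia. Qed.

Lemma take_block a b (s : seq T) : a <= b -> take b s = take a s ++ block a b s.
Proof. by move=> H; rewrite /block -{1}(cat_take_drop a (take b s)) take_takel. Qed.

End Helpers.

Lemma seq_cycleE (T : finType) (sq : seq T) (H : uniq sq) x :
  seq_cycle sq x = next sq x.
Proof.
have G : forall b (e : uniq sq = b),
  (match b as b0 return uniq sq = b0 -> {perm T} with
   | true => fun H => perm (can_inj (prev_next H))
   | false => fun _ => 1%g end e) x = next sq x.
  by case=> e; [rewrite permE | rewrite H in e].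
exact: G.
Qed.

Lemma seq_cycleVE (T : finType) (sq : seq T) (H : uniq sq) x :
  (seq_cycle sq)^-1%g x = prev sq x.
Proof. by rewrite -{1}(next_prev H x) -seq_cycleE // permK. Qed.

Lemma chi_piE (T : finType) i j k l (sq : seq T) pi x : uniq sq ->
  uniq (swap_blocks i j k l sq) ->
  chi_pi i j k l sq pi x = pi (prev sq (next (swap_blocks i j k l sq) x)).
Proof.
move=> U U'; rewrite /chi_pi /pcomp /diagonal /pcomp permM invMg invgK permM.
by rewrite seq_cycleVE // seq_cycleE.
Qed.


Lemma perm_swap (T : eqType) i j k l (sq : seq T) : i <= j -> j < k -> k <= l ->
  perm_eq (swap_blocks i j k l sq) sq.
Proof.
move=> H1 H2 H3.
rewrite -{2}(cat_take_drop l.+1 sq) (@take_block _ k l.+1 sq) //.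
rewrite (@take_block _ j.+1 k sq) // (@take_block _ i j.+1 sq) //.
rewrite /swap_blocks -!catA perm_cat2l.
  by apply/seq.permP => p; rewrite !count_cat; lia.
all: lia.
Qed.

Definition gidx i j k l p :=
  if p < i then p
  else if p < i + (l.+1 - k) then k + (p - i)
  else if p < i + (l.+1 - k) + (k - j.+1) then j.+1 + (p - i - (l.+1 - k))
  else if p < l.+1 then i + (p - (i + (l.+1 - k) + (k - j.+1)))
  else p.

Definition hq n i j k l p :=
  let q := if p.+1 < n then gidx i j k l p.+1 else 0 in
  if 0 < q then q.-1 else n.-1.

Ltac solve_idx := rewrite /hq /gidx; repeat (case: ifPn => /=); intros; lia.

Lemma nth_sh (T : eqType) (x0 : T) i j k l (sq : seq T) p :
  i <= j -> j < k -> k <= l -> l < size sq ->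
  nth x0 (swap_blocks i j k l sq) p = nth x0 sq (gidx i j k l p).
Proof.
move=> H1 H2 H3 H4.
rewrite /swap_blocks nth_cat size_takel; last by lia.
case: ltnP => P1.
  by rewrite nth_take // /gidx P1.
rewrite nth_cat size_block; last by lia.
case: ltnP => P2.
  rewrite nth_block //; congr (nth x0 sq _); solve_idx.
rewrite nth_cat size_block; last by lia.
case: ltnP => P3.
  rewrite nth_block //; congr (nth x0 sq _); solve_idx.
rewrite nth_cat size_block; last by lia.
case: ltnP => P4.
  rewrite nth_block //; congr (nth x0 sq _); solve_idx.
rewrite nth_drop; congr (nth x0 sq _); solve_idx.
Qed.

Theorem lemma1 (n : nat) (sq : seq 'I_n) (pi : {perm 'I_n}) (i j k l : nat) (x0 : 'I_n) :
  uniq sq -> size sq = n ->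
  1 <= i -> i <= j -> j < k -> k <= l -> l <= n - 1 ->
  let s_ := fun r => nth x0 sq r in
  let pih := chi_pi i j k l sq pi in
  (forall r, r < n -> r \notin [:: i.-1; j; k.-1; l] -> pih (s_ r) = pi (s_ r)) /\
  (j.+1 < k ->
     [/\ pih (s_ i.-1) = pi (s_ k.-1), pih (s_ j) = pi (s_ l),
         pih (s_ k.-1) = pi (s_ i.-1) & pih (s_ l) = pi (s_ j)]) /\
  (j = k.-1 ->
     [/\ pih (s_ i.-1) = pi (s_ j), pih (s_ j) = pi (s_ l) & pih (s_ l) = pi (s_ i.-1)]).
Proof.
move=> U Hs H0 H1 H2 H3 H4 s_ pih.
have Hl : l < size sq by lia.
have PE := @perm_swap _ i j k l sq H1 H2 H3.
have U' : uniq (swap_blocks i j k l sq) by rewrite (perm_uniq PE).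
have Hsz : size (swap_blocks i j k l sq) = n by rewrite (perm_size PE).
have key : forall p, p < n -> pih (s_ (gidx i j k l p)) = pi (s_ (hq n i j k l p)).
  move=> p Hp; rewrite /pih (@chi_piE _ i j k l sq pi _ U U'); rewrite /s_ -nth_sh //.
  case: (ltnP p.+1 n) => Hp1.
    rewrite nextN1 ?Hsz // nth_sh //.
    have Hg : gidx i j k l p.+1 < n by solve_idx.
    rewrite /hq Hp1 /=.
    case: (gidx i j k l p.+1) Hg => [|q] Hg /=.
      by rewrite prevP2 ?Hs //; lia.
    by rewrite prevP1 ?Hs.
  have -> : p = (size (swap_blocks i j k l sq)).-1 by lia.
  rewrite nextN2 ?Hsz //; last by lia.
  rewrite nth_sh // (_ : gidx i j k l 0 = 0); last by solve_idx.
  rewrite prevP2 ?Hs //; last by lia.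
  congr (pi (nth x0 sq _)); solve_idx.
have app : forall p r t, p < n -> gidx i j k l p = r -> hq n i j k l p = t ->
    pih (s_ r) = pi (s_ t).
  by move=> p r t Hp <- <-; exact: key.
split; [|split].
- move=> r Hr; rewrite !inE !negb_or => /and4P[Ha Hb Hc Hd].
  move/eqP: Ha => Ha; move/eqP: Hb => Hb; move/eqP: Hc => Hc; move/eqP: Hd => Hd.
  case: (ltnP r i) => R1.
    by apply: (app r); solve_idx.
  case: (ltnP r j) => R2.
    by apply: (app (r + l - j)); solve_idx.
  case: (ltnP r k) => R3.
    by apply: (app (r + i + l - k - j)); solve_idx.
  case: (ltnP r l) => R4.
    by apply: (app (i + r - k)); solve_idx.
  by apply: (app r); solve_idx.
- move=> J; split.
  + by apply: (app i.-1); solve_idx.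
  + by apply: (app l); solve_idx.
  + by apply: (app (i + l - j - 1)); solve_idx.
  + by apply: (app (i + l - k)); solve_idx.
- move=> J; split.
  + by apply: (app i.-1); solve_idx.
  + by apply: (app l); solve_idx.
  + by apply: (app (i + l - k)); solve_idx.
Qed.
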